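(* Let $\mu$ be an $E_2$-invariant Borel probability measure on $\mathbb{T}$ with $\mathrm{supp}(\mu)\subset F$ for some flower $F$ for $E_2$, and let $P$ be the petal of $F$ containing $0$. If $\mu(P)>0$, then $\mu(\{0\})>0$.
   Context: $\mathbb{T}=\mathbb{R}/\mathbb{Z}$, $E_2(x)=2x\bmod1$. A preimage selector for $E_2$ is a map $\eta:\mathbb{T}\to\mathbb{T}$ with $E_2(\eta(x))=x$ for all $x$, having finitely many discontinuities, each a jump discontinuity (both one-sided limits exist, differ, and one equals the value). A flower is $\overline{\eta(\mathbb{T})}$ for a preimage selector $\eta$; its connected components (closed intervals) are its petals. *)

(* Defs.v *)
(* The circle T = R/Z is modelled through
   Z-periodic lifts to R and the representative interval [0,1). *)
From HB Require Import structures.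
From mathcomp Require Import all_boot all_order all_algebra.
From mathcomp Require Import all_classical all_reals all_analysis.
Set Implicit Arguments. Unset Strict Implicit. Unset Printing Implicit Defensive.
Import Order.TTheory GRing.Theory Num.Theory.
Import numFieldNormedType.Exports.
Local Open Scope classical_set_scope.
Local Open Scope ring_scope.

Section Circle.
Variable R : realType.

Definition frac (x : R) : R := x - (Num.floor x)%:~R.

Definition E2 (x : R) : R := frac (2 * x).

Definition dT (x y : R) : R := Num.min (frac (x - y)) (1 - frac (x - y)).

Definition I01 : set R := [set x | 0 <= x < 1].

(* f : R -> R is assumed 1-periodic, so it denotes a map T -> T (values mod 1) *)
Definition Tcont (f : R -> R) (x : R) : Prop :=
  forall e, 0 < e -> exists2 d, 0 < d &
    forall y, dT x y < d -> dT (f x) (f y) < e.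

Definition Tleft_lim (f : R -> R) (x L : R) : Prop :=
  forall e, 0 < e -> exists2 d, 0 < d &
    forall h, 0 < h < d -> dT (f (x - h)) L < e.

Definition Tright_lim (f : R -> R) (x L : R) : Prop :=
  forall e, 0 < e -> exists2 d, 0 < d &
    forall h, 0 < h < d -> dT (f (x + h)) L < e.

Definition jump_at (f : R -> R) (x : R) : Prop :=
  exists L Rl, [/\ Tleft_lim f x L, Tright_lim f x Rl,
                   frac L <> frac Rl &
                   frac L = frac (f x) \/ frac Rl = frac (f x)].

Definition preimage_selector (eta : R -> R) : Prop :=
  [/\ (forall x, eta (x + 1) = eta x),
      (forall x, E2 (eta x) = frac x),
      (exists s : seq R, forall x, I01 x -> ~ Tcont eta x -> x \in s) &
      (forall x, ~ Tcont eta x -> jump_at eta x)].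

(* lift to R (Z-periodic set) of a subset of T given by its representatives *)
Definition liftT (A : set R) : set R := [set y | A (frac y)].

(* Z-periodic lift of the flower  closure(eta(T))  (closure in R of the lift
   of eta(T), which is the lift of the closure in T) *)
Definition flower_of (eta : R -> R) : set R :=
  closure [set y | exists x, frac y = frac (eta x)].

Definition is_flower (F : set R) : Prop :=
  exists2 eta, preimage_selector eta & F = flower_of eta.

(* the petal of F containing 0, as a subset of the representatives [0,1):
   the image in T of the connected component of 0 in the lift of F *)
Definition petal0 (F : set R) : set R :=
  [set y | I01 y /\ exists2 z, connected_component F 0 z & frac z = y].

(* a Borel probability measure on T, as a measure on R carried by [0,1) *)
Definition T_probability (mu : {measure set R -> \bar R}) : Prop :=
  mu I01 = 1%E /\ mu (~` I01) = 0%E.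

Definition E2_invariant (mu : {measure set R -> \bar R}) : Prop :=
  forall A, measurable A -> A `<=` I01 -> mu (E2 @^-1` A `&` I01) = mu A.

Definition supp_subset (mu : {measure set R -> \bar R}) (F : set R) : Prop :=
  forall x, I01 x -> ~ F x ->
    exists2 e, 0 < e & mu [set y | I01 y /\ dT x y < e] = 0%E.

End Circle.

(* Main.v *)
Require Import Defs.
From HB Require Import structures.
From mathcomp Require Import all_boot all_order all_algebra.
From mathcomp Require Import all_classical all_reals all_analysis.
From mathcomp Require Import ring lra.
Import Order.TTheory GRing.Theory Num.Theory.
Import numFieldNormedType.Exports.
Local Open Scope classical_set_scope.
Local Open Scope ring_scope.
Local Notation frac := (@Defs.frac _).
Local Notation dT := (@Defs.dT _).
Local Notation I01 := (@Defs.I01 _).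
Local Notation E2 := (@Defs.E2 _).

Section Basics.
Variable R : realType.
Implicit Types x y z a b : R.

Lemma int_cases (k : int) : 0 <= k%:~R :> R \/ k%:~R <= -1 :> R.
Proof.
case: k => n; [left; exact: ler0n | right].
change (- (n.+1)%:R <= -1 :> R); rewrite mulrS; have := ler0n R n; lra.
Qed.

Lemma int_small (k : int) : `|k%:~R : R| < 1 -> k = 0.
Proof.
have [h|h] := int_cases k; last by rewrite ler0_norm; [move=> ?; exfalso; lra | lra].
rewrite ger0_norm //; case: k h => n; last first.
  move=> h; exfalso; move: h; rewrite NegzE mulrNz -pmulrn mulrS.
  have := ler0n R n; lra.
move=> _; rewrite -pmulrn ltrn1; by case: n.
Qed.

Lemma frac_itv x : 0 <= frac x < 1.
Proof.
rewrite /frac; have /andP[h1 h2] := floor_itv x.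
rewrite intrD in h2; apply/andP; split; lra.
Qed.

Lemma fracE x : x = frac x + (Num.floor x)%:~R.
Proof. rewrite /frac; ring. Qed.

Lemma frac_shift x (k : int) : frac (x + k%:~R) = frac x.
Proof.
rewrite /frac floorDrz ?intr_int // intrKfloor intrD; ring.
Qed.

Lemma frac_eqP x y : frac x = frac y <-> exists k : int, x = y + k%:~R.
Proof.
split.
  move=> h; exists (Num.floor x - Num.floor y).
  have ex := fracE x; have ey := fracE y; rewrite h in ex.
  rewrite intrB; lra.
by case=> k ->; rewrite frac_shift.
Qed.

Lemma frac_I01 x : I01 (frac x).
Proof. exact: frac_itv. Qed.

Lemma frac_id x : 0 <= x < 1 -> frac x = x.
Proof.
move=> h; rewrite /frac (_ : Num.floor x = 0) ?subr0 //.
apply: floor_def; rewrite add0r; lra.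
Qed.

Lemma dT_le x y (k : int) : dT x y <= `|x - y - k%:~R|.
Proof.
rewrite /dT; set f := frac (x - y).
have hf := frac_itv (x - y); rewrite -/f in hf.
have e : x - y = f + (Num.floor (x - y))%:~R by exact: fracE.
have [h|h] := int_cases (Num.floor (x - y) - k).
  rewrite intrB in h.
  rewrite ge_min; apply/orP; left.
  rewrite e ger0_norm; lra.
rewrite intrB in h.
rewrite ge_min; apply/orP; right.
rewrite e ler0_norm; lra.
Qed.

Lemma dT_ex x y : exists k : int, dT x y = `|x - y - k%:~R|.
Proof.
rewrite /dT; set f := frac (x - y).
have hf := frac_itv (x - y); rewrite -/f in hf.
have e : x - y = f + (Num.floor (x - y))%:~R by exact: fracE.
set m := Num.floor (x - y) in e *.
case: (leP f (1 - f)) => h.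
  exists m.
  rewrite e ger0_norm; lra.
exists (m + 1).
rewrite e intrD ler0_norm; lra.
Qed.

Lemma dT_ge0 x y : 0 <= dT x y.
Proof. by have [k ->] := dT_ex x y. Qed.

Lemma dT_tri x y z : dT x z <= dT x y + dT y z.
Proof.
have [k1 ->] := dT_ex x y; have [k2 ->] := dT_ex y z.
apply: le_trans (dT_le x z (k1 + k2)) _.
rewrite intrD (_ : x - z - _ = (x - y - k1%:~R) + (y - z - k2%:~R)); last ring.
exact: ler_normD.
Qed.

Lemma dT_sym x y : dT x y = dT y x.
Proof.
apply/eqP; rewrite eq_le; apply/andP; split.
  have [k ->] := dT_ex y x; apply: le_trans (dT_le x y (- k)) _.
  by rewrite (_ : x - y - (-k)%:~R = -(y - x - k%:~R)) ?normrN // mulrNz; ring.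
have [k ->] := dT_ex x y; apply: le_trans (dT_le y x (- k)) _.
by rewrite (_ : y - x - (-k)%:~R = -(x - y - k%:~R)) ?normrN // mulrNz; ring.
Qed.

Lemma dT_abs x y : dT x y <= `|x - y|.
Proof. by have := dT_le x y 0; rewrite subr0. Qed.

Lemma dT_congr x y x' y' (k : int) : x - y = x' - y' + k%:~R -> dT x y = dT x' y'.
Proof. by move=> h; rewrite /dT h frac_shift. Qed.

Lemma dT_ltP x y e : dT x y < e <-> exists k : int, `|x - y - k%:~R| < e.
Proof.
split; first by have [k ->] := dT_ex x y; exists k.
by case=> k h; apply: le_lt_trans (dT_le _ _ k) h.
Qed.

Lemma dT_half x : dT x (x + 2^-1) = 2^-1.
Proof.
apply/eqP; rewrite eq_le; apply/andP; split.
  apply: le_trans (dT_abs _ _) _; rewrite (_ : x - (x + 2^-1) = - 2^-1); last ring.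
  by rewrite normrN ger0_norm.
have [k ->] := dT_ex x (x + 2^-1).
rewrite (_ : x - (x + 2^-1) - k%:~R = - (2^-1 + k%:~R)); last ring.
rewrite normrN; have [h|h] := int_cases k.
  rewrite ger0_norm; lra.
rewrite ler0_norm; lra.
Qed.

Lemma dT0 x y : dT x y = 0 -> frac x = frac y.
Proof.
have [k ->] := dT_ex x y => /normr0_eq0 h.
apply/frac_eqP; exists k; lra.
Qed.

End Basics.
Arguments int_cases {R}.
Arguments int_small {R}.
Arguments frac_itv {R}.
Arguments fracE {R}.
Arguments frac_shift {R}.
Arguments frac_eqP {R}.
Arguments frac_I01 {R}.
Arguments frac_id {R}.
Arguments dT_le {R}.
Arguments dT_ex {R}.
Arguments dT_ge0 {R}.
Arguments dT_tri {R}.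
Arguments dT_sym {R}.
Arguments dT_abs {R}.
Arguments dT_congr {R}.
Arguments dT_ltP {R}.
Arguments dT_half {R}.
Arguments dT0 {R}.

Lemma nonneg_small (R : realType) (a : R) : 0 <= a -> (forall e, 0 < e -> a < e) -> a = 0.
Proof.
move=> h0 h; apply/eqP; rewrite eq_le h0 andbT; rewrite leNgt; apply/negP => ha.
by have := h a ha; rewrite ltxx.
Qed.

Lemma closure_near (R : realType) (A : set R) (p r : R) :
  closure A p -> 0 < r -> exists y, A y /\ `|p - y| < r.
Proof.
move=> hc hr; have [y [Ay By]] := hc _ (nbhsx_ballx p r hr).
by exists y; split => //; move: By; rewrite -ball_normE.
Qed.

Arguments closure_near {R A p r}.

Section Selector.
Variable R : realType.
Variable eta : R -> R.
Hypothesis Hsel : preimage_selector eta.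
Let F := flower_of eta.
Let S := [set y : R | exists x, frac y = frac (eta x)].

Lemma eta_per x (k : int) : eta (x + k%:~R) = eta x.
Proof.
have [hp _ _ _] := Hsel.
have hn : forall (n : nat) x, eta (x + n%:R) = eta x.
  elim=> [|n IH] x0; first by rewrite addr0.
  by rewrite -addn1 natrD addrA hp IH.
case: k => n; first exact: hn.
rewrite NegzE mulrNz; change (eta (x - (n.+1)%:R) = eta x).
by rewrite -{2}(subrK ((n.+1)%:R) x) hn.
Qed.

Lemma eta_branch x : exists j : int, 2 * eta x = x + j%:~R.
Proof. by have [_ hb _ _] := Hsel; apply/frac_eqP; exact: hb. Qed.

Lemma S_inv y : S y -> exists x (k m : int), y = eta x + k%:~R /\ x = 2 * y + m%:~R.
Proof.
case=> x /frac_eqP [k hk]; exists x, k.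
have [j hj] := eta_branch x.
exists (- k - k - j); split => //.
rewrite !intrB intrN; lra.
Qed.

Lemma min3_facts (d a b : R) : 0 < d -> 0 < a -> 0 < b ->
  let m := Num.min d (Num.min a b) in [/\ 0 < m, m <= d, m <= a & m <= b].
Proof.
move=> hd ha hb m; split.
- by rewrite /m !lt_min hd ha hb.
- by rewrite /m ge_min lexx.
- by rewrite /m ge_min ge_min lexx orbT.
- by rewrite /m ge_min ge_min lexx !orbT.
Qed.

Section Nbhd.
Variables (z eps : R).
Hypothesis heps : 0 < eps.
Hypothesis hF : forall p, `|p - z| < eps -> F p.

Lemma left_lim L : Tleft_lim eta (2 * z) L -> frac L = frac z.
Proof.
move=> hl; apply: dT0; apply: nonneg_small; first exact: dT_ge0.
move=> e he.
have he2 : 0 < e / 2 by lra.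
have [d hd hL] := hl _ he2.
have [hm0 hmd hme hmE] := min3_facts d eps e hd heps he.
set h0 := Num.min d (Num.min eps e) in hm0 hmd hme hmE.
have Fp : F (z - h0 / 4).
  apply: hF; rewrite (_ : z - h0 / 4 - z = - (h0 / 4)); last ring.
  rewrite normrN ger0_norm; lra.
have h4 : 0 < h0 / 8 by lra.
have [y [Sy hy]] := closure_near Fp h4.
have [x [k [m [hyx hxy]]]] := S_inv _ Sy.
move: hy; rewrite ltr_norml => /andP [hy1 hy2].
have hx : x = (2 * z - (2 * z - 2 * y)) + m%:~R by rewrite hxy; ring.
have h1 : dT (eta x) L < e / 2.
  rewrite hx eta_per; apply: hL; apply/andP; split; lra.
apply: le_lt_trans (dT_tri _ (eta x) _) _.
rewrite dT_sym.
have h2 : dT (eta x) z < e / 2.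
  rewrite (@dT_congr _ (eta x) z y z (- k)); last by rewrite hyx intrN; ring.
  apply: le_lt_trans (dT_abs _ _) _.
  rewrite ltr_norml; apply/andP; split; lra.
lra.
Qed.

Lemma right_lim L : Tright_lim eta (2 * z) L -> frac L = frac z.
Proof.
move=> hl; apply: dT0; apply: nonneg_small; first exact: dT_ge0.
move=> e he.
have he2 : 0 < e / 2 by lra.
have [d hd hL] := hl _ he2.
have [hm0 hmd hme hmE] := min3_facts d eps e hd heps he.
set h0 := Num.min d (Num.min eps e) in hm0 hmd hme hmE.
have Fp : F (z + h0 / 4).
  apply: hF; rewrite (_ : z + h0 / 4 - z = h0 / 4); last ring.
  rewrite ger0_norm; lra.
have h4 : 0 < h0 / 8 by lra.
have [y [Sy hy]] := closure_near Fp h4.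
have [x [k [m [hyx hxy]]]] := S_inv _ Sy.
move: hy; rewrite ltr_norml => /andP [hy1 hy2].
have hx : x = (2 * z + (2 * y - 2 * z)) + m%:~R by rewrite hxy; ring.
have h1 : dT (eta x) L < e / 2.
  rewrite hx eta_per; apply: hL; apply/andP; split; lra.
apply: le_lt_trans (dT_tri _ (eta x) _) _.
rewrite dT_sym.
have h2 : dT (eta x) z < e / 2.
  rewrite (@dT_congr _ (eta x) z y z (- k)); last by rewrite hyx intrN; ring.
  apply: le_lt_trans (dT_abs _ _) _.
  rewrite ltr_norml; apply/andP; split; lra.
lra.
Qed.

Lemma eta_cont : Tcont eta (2 * z).
Proof.
case: (pselect (Tcont eta (2 * z))) => // hnc.
have [_ _ _ hj] := Hsel.
have [L [Rl [hl hr hne _]]] := hj _ hnc.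
by exfalso; apply: hne; rewrite (left_lim _ hl) (right_lim _ hr).
Qed.

Lemma eta_val : frac (eta (2 * z)) = frac z.
Proof.
apply: left_lim => e he.
have [d hd hc] := eta_cont e he.
exists d => // h /andP [h0 h1].
rewrite dT_sym; apply: hc.
apply: le_lt_trans (dT_abs _ _) _.
by rewrite (_ : 2 * z - (2 * z - h) = h); [rewrite ger0_norm; lra | ring].
Qed.

Lemma no_half (k : int) : ~ F (z + 2^-1 + k%:~R).
Proof.
move=> Fh.
have h4 : (0 : R) < 4^-1 by lra.
have [d hd hc] := eta_cont _ h4.
have hr : 0 < Num.min d (8^-1) / 2.
  by apply: divr_gt0 => //; rewrite lt_min hd /=; lra.
have hr1 : Num.min d (8^-1) / 2 <= d / 2.
  by rewrite ler_pM2r // ge_min lexx.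
have hr2 : Num.min d (8^-1) / 2 <= 16^-1.
  rewrite (_ : (16^-1 : R) = 8^-1 / 2); last by field.
  by rewrite ler_pM2r // ge_min lexx orbT.
set r := Num.min d (8^-1) / 2 in hr hr1 hr2.
have [y [Sy hy]] := closure_near Fh hr.
have [x [k1 [m [hyx hxy]]]] := S_inv _ Sy.
have hd2 : dT (2 * z) x < d.
  apply: le_lt_trans (dT_le _ _ (-1 - k - k - m)) _.
  rewrite !intrB.
  rewrite (_ : 2 * z - x - _ = 2 * ((z + 2^-1 + k%:~R) - y)); last first.
    by rewrite hxy; field.
  rewrite normrM ger0_norm //; lra.
have := hc _ hd2.
have [k2 hk2] := (frac_eqP _ _).1 eta_val.
rewrite (@dT_congr _ (eta (2 * z)) (eta x) z y (k2 + k1)); last first.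
  by rewrite hk2 hyx intrD; ring.
move=> hzy.
have hh : dT z (z + 2^-1 + k%:~R) = 2^-1.
  have -> : dT z (z + 2^-1 + k%:~R) = dT z (z + 2^-1).
    by apply: (dT_congr _ _ _ _ (- k)); rewrite intrN; ring.
  exact: dT_half.
have := dT_tri z y (z + 2^-1 + k%:~R).
rewrite hh.
have : dT y (z + 2^-1 + k%:~R) <= `|y - (z + 2^-1 + k%:~R)| by exact: dT_abs.
rewrite distrC; lra.
Qed.

End Nbhd.

End Selector.

Section Meas.
Variable R : realType.

Definition rep (A : set R) : set R := [set y | I01 y /\ exists k : int, A (y + k%:~R)].

Lemma I01_interval : is_interval (I01 : set R).
Proof. move=> x y /andP [hx1 hx2] /andP [hy1 hy2] z /andP [h1 h2]; apply/andP; split; lra. Qed.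

Lemma shift_interval (A : set R) (r : R) : is_interval A -> is_interval [set y | A (y + r)].
Proof.
move=> hA x y hx hy z /andP [h1 h2]; apply: (hA _ _ hx hy).
apply/andP; split; lra.
Qed.

Lemma int_nat (k : int) : exists n : nat, k%:~R = n%:R :> R \/ k%:~R = - n%:R :> R.
Proof.
case: k => n; first by exists n; left.
by exists n.+1; right; rewrite NegzE mulrNz.
Qed.

Lemma rep_meas (A : set R) : is_interval A -> measurable (rep A).
Proof.
move=> hA.
have -> : rep A = I01 `&` ((\bigcup_n [set y | A (y + n%:R)]) `|`
                           (\bigcup_n [set y | A (y + - n%:R)])).
  apply/seteqP; split.
    move=> y [hy [k hk]]; split => //.
    have [n [e|e]] := int_nat k; rewrite e in hk.
      by left; exists n.
    by right; exists n.
  move=> y [hy [[n _ hn]|[n _ hn]]]; split => //.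
    by exists n; rewrite -pmulrn.
  by exists (- n%:Z); rewrite intrN -pmulrn.
apply: measurableI.
  exact: measurable_realfun.is_interval_measurable I01_interval.
apply: measurableU; apply: bigcupT_measurable => n;
  apply: measurable_realfun.is_interval_measurable; exact: shift_interval.
Qed.

Lemma dTset_rep (x e : R) :
  [set y | I01 y /\ dT x y < e] = rep [set u | `|u - x| < e].
Proof.
apply/seteqP; split.
  move=> y [hy /dT_ltP [k hk]]; split => //; exists k.
  by rewrite /= -normrN (_ : - (y + k%:~R - x) = x - y - k%:~R) //; ring.
move=> y [hy [k hk]]; split => //; apply/dT_ltP; exists k.
by rewrite -normrN (_ : - (x - y - k%:~R) = y + k%:~R - x) //; ring.
Qed.

Lemma ball_interval (x e : R) : is_interval [set u | `|u - x| < e].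
Proof.
move=> a b /= ha hb z /andP [h1 h2]; move: ha hb; rewrite !ltr_norml => /andP [? ?] /andP [? ?].
apply/andP; split; lra.
Qed.

Lemma dTset_meas (x e : R) : measurable [set y | I01 y /\ dT x y < e].
Proof. by rewrite dTset_rep; apply: rep_meas; exact: ball_interval. Qed.

Lemma supp_null (mu : {measure set R -> \bar R}) (F : set R) : closed F -> supp_subset mu F ->
  mu (I01 `&` ~` F) = 0%E.
Proof.
move=> cF hs.
pose Bq (p : rat * rat) : set R := I01 `&` [set u | `|u - ratr p.1| < ratr p.2].
have mBq p : measurable (Bq p).
  apply: measurableI; apply: measurable_realfun.is_interval_measurable.
    exact: I01_interval.
  exact: ball_interval.
pose G (n : nat) : set R := match unpickle n with
  | Some p => if pselect (mu (Bq p) = 0%E) then Bq p else set0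
  | None => set0 end.
have mG n : measurable (G n).
  rewrite /G; case: (unpickle n) => [p|]; last exact: measurable0.
  by destruct (pselect (mu (Bq p) = 0%E)); [exact: mBq | exact: measurable0].
have G0 n : mu (G n) = 0%E.
  rewrite /G; case: (unpickle n) => [p|]; last exact: measure0.
  by destruct (pselect (mu (Bq p) = 0%E)) as [h|h]; [exact: h | exact: measure0].
have mN : measurable (I01 `&` ~` F).
  apply: measurableI; first exact: measurable_realfun.is_interval_measurable I01_interval.
  by apply: measurableC; exact: measurable_realfun.closed_measurable.
apply/eqP; rewrite eq_le measure_ge0 andbT.
have hsub : I01 `&` ~` F `<=` \bigcup_n G n; last first.
  apply: le_trans (measure_sigma_subadditive mu mG mN hsub) _.
  by rewrite eseries0.
move=> x [hx hnF].
have [e he hnull] := hs x hx hnF.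
have he4 : x - e / 4 < x + e / 4 by lra.
have [a] := rat_in_itvoo he4; rewrite in_itv /= => /andP [ha1 ha2].
have he8 : e / 4 < e / 2 by lra.
have [b] := rat_in_itvoo he8; rewrite in_itv /= => /andP [hb1 hb2].
exists (pickle (a, b)); first exact: I.
rewrite /G pickleK.
have sub : Bq (a, b) `<=` [set y | I01 y /\ dT x y < e].
  move=> u [hu /=]; rewrite ltr_norml => /andP [hu1 hu2]; split => //.
  apply: le_lt_trans (dT_abs _ _) _; rewrite ltr_norml; apply/andP; split; lra.
have z : mu (Bq (a, b)) = 0%E.
  apply/eqP; rewrite eq_le measure_ge0 andbT -hnull.
  by apply: le_measure => //; rewrite inE //; exact: dTset_meas.
destruct (pselect (mu (Bq (a, b)) = 0%E)) as [hz|hz]; last by exfalso; apply: hz; exact: z.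
split; first exact: hx.
change (`|x - ratr a| < ratr b).
rewrite ltr_norml; apply/andP; split; lra.
Qed.

End Meas.
Arguments rep {R}.
Arguments I01_interval {R}.
Arguments shift_interval {R}.
Arguments int_nat {R}.
Arguments rep_meas {R}.
Arguments dTset_rep {R}.
Arguments ball_interval {R}.
Arguments dTset_meas {R}.
Arguments supp_null {R}.

Section Meas2.
Variable R : realType.

Definition hp (n : nat) : R := ((2:R) ^+ n)^-1.

Lemma hp_pos n : 0 < hp n.
Proof. by rewrite /hp invr_gt0 exprn_gt0. Qed.

Lemma hpS n : hp n.+1 = hp n / 2.
Proof. by rewrite /hp exprS invfM mulrC. Qed.

Lemma hp0 : hp 0 = 1.
Proof. by rewrite /hp expr0 invr1. Qed.

Lemma hp_le1 n : hp n <= 1.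
Proof.
elim: n => [|n IH]; first by rewrite hp0.
rewrite hpS; have := hp_pos n; lra.
Qed.

Lemma hp_anti n m : (n <= m)%N -> hp m <= hp n.
Proof.
move=> /subnKC <-; elim: (m - n)%N => [|i IH]; first by rewrite addn0.
rewrite addnS hpS; have := hp_pos (n + i); lra.
Qed.

Lemma hp_nat n : (n.+1)%:R * hp n <= 1.
Proof.
elim: n => [|n IH]; first by rewrite hp0 mulr1.
rewrite hpS (mulrS _ n.+1); have := hp_le1 n; have := hp_pos n.
move: IH; set a := (n.+1)%:R; set h := hp n; nra.
Qed.

Lemma ex_shell (t : R) : 0 < t <= 1 -> exists n, hp n.+1 < t <= hp n.
Proof.
move=> /andP [t0 t1].
have [N hN] : exists N, hp N < t.
  exists (Num.trunc t^-1).
  have h1 := truncnS_gt t^-1.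
  set M := (Num.trunc t^-1).+1%:R in h1.
  have hM := hp_nat (Num.trunc t^-1); rewrite -/M in hM.
  have ht : t * t^-1 = 1 by rewrite mulfV // gt_eqF.
  have hp0' := hp_pos (Num.trunc t^-1).
  have : 1 < t * M by nra.
  nra.
elim: N hN => [|N IH] hN; first by rewrite hp0 in hN; lra.
case: (ltP (hp N) t) => h; first exact: IH.
by exists N; rewrite hN.
Qed.

Lemma parity (j : int) : exists m : int, j%:~R = 2 * m%:~R :> R \/ j%:~R = 2 * m%:~R + 1 :> R.
Proof.
set m := Num.floor (j%:~R / 2 : R); exists m.
have /andP [h1 h2] := floor_itv (j%:~R / 2 : R); rewrite -/m intrD in h1 h2.
have [h|h] := ltP ((j - m - m)%:~R : R) 1.
  left; have : j - m - m = 0.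
    apply: (@int_small R); rewrite !intrB ger0_norm; move: h; rewrite !intrB; lra.
  move=> /(congr1 (fun z : int => z%:~R : R)); rewrite !intrB; lra.
right; have : j - m - m - 1 = 0.
  apply: (@int_small R); rewrite !intrB ger0_norm; move: h; rewrite !intrB; lra.
move=> /(congr1 (fun z : int => z%:~R : R)); rewrite !intrB; lra.
Qed.

Lemma rep_mono (A B : set R) : A `<=` B -> rep A `<=` rep B.
Proof. by move=> hAB y [hy [k hk]]; split => //; exists k; apply: hAB. Qed.

Lemma rep_I01 (A : set R) : rep A `<=` I01.
Proof. by move=> y []. Qed.

Lemma E2_pre (A : set R) :
  E2 @^-1` (rep A) `&` I01 = rep [set u | A (2 * u)] `|` rep [set u | A (2 * u + 1)].
Proof.
apply/seteqP; split.
  move=> x [[_ [k hk]] hx].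
  move: hk; rewrite /E2 /Defs.frac.
  set j := k - Num.floor (2 * x).
  have -> : 2 * x - (Num.floor (2 * x))%:~R + k%:~R = 2 * x + j%:~R by rewrite /j intrB; ring.
  have [m [e|e]] := parity j; rewrite e => hA.
    by left; split => //; exists m => /=; rewrite mulrDr.
  by right; split => //; exists m => /=; rewrite mulrDr -addrA.
move=> x [[hx [k hk]]|[hx [k hk]]]; (split; last exact: hx);
  (change (rep A (E2 x)); split; first exact: frac_I01).
  exists (Num.floor (2 * x) + k + k).
  rewrite /E2 /Defs.frac.
  have -> : 2 * x - (Num.floor (2 * x))%:~R + (Num.floor (2 * x) + k + k)%:~R
    = 2 * (x + k%:~R) by rewrite !intrD; ring.
  exact: hk.
exists (Num.floor (2 * x) + k + k + 1).
rewrite /E2 /Defs.frac.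
have -> : 2 * x - (Num.floor (2 * x))%:~R + (Num.floor (2 * x) + k + k + 1)%:~R
  = 2 * (x + k%:~R) + 1 by rewrite !intrD; ring.
exact: hk.
Qed.

Lemma half_interval (A : set R) (a : R) : is_interval A -> is_interval [set u | A (2 * u + a)].
Proof.
move=> hA x y hx hy z /andP [h1 h2]; apply: (hA _ _ hx hy).
apply/andP; split; lra.
Qed.

Fixpoint Ucum (B : nat -> set R) (n N : nat) : set R :=
  match N with 0 => set0 | N'.+1 => Ucum B n N' `|` B (n + N')%N end.

Lemma Ucum_mem B n N x : Ucum B n N x -> exists2 i, (i < N)%N & B (n + i)%N x.
Proof.
elim: N => [//|N IH] /= [/IH [i hi hB]|hB].
  by exists i => //; rewrite ltnS ltnW.
by exists N.
Qed.

Lemma shells_null (mu : {measure set R -> \bar R}) (B : nat -> set R) :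
  (forall n, measurable (B n)) -> (forall n, B n `<=` I01) ->
  (forall n m x, B n x -> B m x -> n = m) ->
  (forall n, (mu (B n) <= mu (B n.+1))%E) -> mu I01 = 1%E ->
  forall n, mu (B n) = 0%E.
Proof.
move=> mB sB dB incB h1 n.
have mI : measurable (I01 : set R) by exact: measurable_realfun.is_interval_measurable I01_interval.
have mU N : measurable (Ucum B n N).
  by elim: N => [|N IH] /=; [exact: measurable0 | exact: measurableU].
have sU N : Ucum B n N `<=` I01.
  by move=> x /Ucum_mem [i _ /sB].
have inc i : (mu (B n) <= mu (B (n + i)%N))%E.
  elim: i => [|i IH]; first by rewrite addn0.
  by apply: le_trans IH _; rewrite addnS.
have key N : ((N%:R)%:E * mu (B n) <= mu (Ucum B n N))%E.
  elim: N => [|N IH] /=; first by rewrite mul0e measure0.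
  rewrite measureU //; last first.
    apply/seteqP; split => // x [/Ucum_mem [i hi hx] hx'].
    have := dB _ _ _ hx hx' => /eqP; rewrite eqn_add2l => /eqP e.
    by rewrite e ltnn in hi.
  rewrite -natr1 EFinD ge0_muleDl ?lee_fin //; apply: leeD => //.
  by rewrite mul1e; exact: inc.
have bnd N : ((N%:R)%:E * mu (B n) <= 1)%E.
  apply: le_trans (key N) _; rewrite -h1; apply: le_measure => //; rewrite inE //.
have r0 : (0 <= mu (B n))%E := measure_ge0 mu (B n).
have r1 := bnd 1%N; rewrite mul1e in r1.
case E : (mu (B n)) => [r| |]; rewrite E in r0 r1 bnd => //.
rewrite lee_fin in r0; rewrite lee_fin in r1.
congr EFin; apply/eqP; rewrite eq_le r0 andbT leNgt; apply/negP => rpos.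
have := bnd (Num.trunc r^-1).+1; rewrite -EFinM lee_fin.
have h := truncnS_gt r^-1.
set M := (Num.trunc r^-1).+1%:R in h *.
have ht : r * r^-1 = 1 by rewrite mulfV // gt_eqF.
nra.
Qed.

End Meas2.

Arguments hp {R}.
Arguments hp_pos {R}.
Arguments hpS {R}.
Arguments hp0 {R}.
Arguments hp_le1 {R}.
Arguments hp_anti {R}.
Arguments hp_nat {R}.
Arguments rep_mono {R}.
Arguments rep_I01 {R}.
Arguments E2_pre {R}.
Arguments half_interval {R}.
Arguments shells_null {R}.
Arguments ex_shell {R}.
Arguments parity {R}.

Lemma cover_seq (R : realType) (E : set R) : is_interval E -> E 0 -> (forall z, E z -> `|z| < 1) ->
  exists g : nat -> R, (forall m, E (g m)) /\ (forall z, E z -> 0 < z -> exists m, z <= g m).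
Proof.
move=> hE E0 hb.
set P := [set z | E z /\ 0 < z].
case: (pselect (P !=set0)) => hP; last first.
  exists (fun _ => 0); split => // z Ez z0; exfalso; apply: hP; by exists z.
have hs : has_sup P.
  split => //; exists 1 => z [Ez _]; have := hb _ Ez; rewrite ltr_norml => /andP [_ ?].
  exact: ltW.
set s := sup P.
have ub : forall z, P z -> z <= s by move=> z Pz; exact: sup_upper_bound.
case: (pselect (E s)) => hEs.
  by exists (fun _ => s); split => // z Ez z0; exists 0%N; apply: ub.
have ex m : exists e, P e /\ s - (m.+1%:R)^-1 < e.
  have hm : 0 < (m.+1%:R : R)^-1 by rewrite invr_gt0.
  by have [e Pe he] := sup_adherent hm hs; exists e.
exists (fun m => proj1_sig (cid (ex m))); split.
  by move=> m; have [[Ee _] _] := proj2_sig (cid (ex m)).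
move=> z Ez z0.
have zs : z < s.
  rewrite lt_neqAle ub; last by split.
  rewrite andbT; apply/eqP => e; apply: hEs; rewrite -e; exact: Ez.
have d0 : 0 < s - z by lra.
exists (Num.trunc (s - z)^-1).
have [_ he] := proj2_sig (cid (ex (Num.trunc (s - z)^-1))).
move: he; set e := proj1_sig _ => he.
have h := truncnS_gt (s - z)^-1.
set M := (Num.trunc (s - z)^-1).+1%:R in h he.
have Mpos : 0 < M by rewrite /M ltr0n.
have hi : (s - z) * (s - z)^-1 = 1 by rewrite mulfV // gt_eqF.
have hMi : M * M^-1 = 1 by rewrite mulfV // gt_eqF.
have hMi0 : 0 < M^-1 by rewrite invr_gt0.
have : M^-1 < s - z.
  rewrite -[M^-1]mul1r ltr_pdivrMr //; nra.
move=> ?; clearbody e M; lra.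
Qed.

Lemma bigcup_null (R : realType) (mu : {measure set R -> \bar R}) (G : nat -> set R) :
  (forall n, measurable (G n)) -> (forall n, mu (G n) = 0%E) -> mu (\bigcup_n G n) = 0%E.
Proof.
move=> mG G0.
have mU : measurable (\bigcup_n G n) by exact: bigcupT_measurable.
apply/eqP; rewrite eq_le measure_ge0 andbT.
apply: le_trans (measure_sigma_subadditive mu mG mU (fun x h => h)) _.
by rewrite eseries0.
Qed.

Definition Ash (R : realType) (c : R) (n : nat) : set R :=
  [set x | exists2 t, hp n.+1 < t <= hp n & x = t * c].
Arguments Ash {R}.

Lemma Ash_int (R : realType) (c : R) n : is_interval (Ash c n).
Proof.
move=> x y [t1 /andP [a1 b1] ->] [t2 /andP [a2 b2] ->] z /andP [h1 h2].
have [c0|c0|c0] := ltgtP c 0.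
- exists (z / c); last by rewrite divfK // lt_eqF.
  set u := z / c; have hz : z = u * c by rewrite /u divfK // lt_eqF.
  rewrite hz in h1 h2; apply/andP; split; nra.
- exists (z / c); last by rewrite divfK // gt_eqF.
  set u := z / c; have hz : z = u * c by rewrite /u divfK // gt_eqF.
  rewrite hz in h1 h2; apply/andP; split; nra.
- subst c; exists t1; first by rewrite a1 b1.
  rewrite !mulr0 in h1 h2 *; lra.
Qed.

Section Main.
Variable R : realType.
Variable mu : {measure set R -> \bar R}.
Variable eta : R -> R.
Hypothesis Hsel : preimage_selector eta.
Hypothesis hprob : T_probability mu.
Hypothesis hinv : E2_invariant mu.
Hypothesis hsupp : supp_subset mu (flower_of eta).
Let F := flower_of eta.
Let C := connected_component F 0.

Lemma C_int : is_interval C.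
Proof. exact/connected_intervalP/component_connected. Qed.

Lemma C_F : C `<=` F.
Proof. exact: connected_component_sub. Qed.

Lemma C0 c : C c -> C 0.
Proof. by case=> B [B0 BF _] _; apply: connected_component_refl; exact: BF. Qed.

Lemma C_between c p : C c -> (0 <= p <= c \/ c <= p <= 0) -> C p.
Proof.
move=> Cc [h|h].
  exact: (C_int _ _ (C0 _ Cc) Cc).
exact: (C_int _ _ Cc (C0 _ Cc)).
Qed.

Lemma F0 c : C c -> F 0.
Proof. by move=> /C0 /C_F. Qed.

Lemma C_small c : C c -> `|c| < 1.
Proof.
move=> Cc; rewrite ltNge; apply/negP => hc.
have [h|h] : 1 <= c \/ c <= -1.
  by move: hc; rewrite ler_normr => /orP [?|?]; [left | right]; lra.
  have C1 : C 1 by apply: (C_between _ _ Cc); left; lra.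
  have hF : forall p, `|p - 2^-1| < 2^-1 -> F p.
    move=> p; rewrite ltr_norml => /andP [h1 h2].
    apply: C_F; apply: (C_between _ _ C1); left; lra.
  have h2 : (0 : R) < 2^-1 by lra.
  have hh := @no_half R eta Hsel (2^-1) (2^-1) h2 hF (-1).
  apply: hh; rewrite (_ : 2^-1 + 2^-1 + (-1)%:~R = 0 :> R); last by rewrite -[(-1)%:~R]/(-1); field.
  exact: (F0 _ Cc).
have C1 : C (-1) by apply: (C_between _ _ Cc); right; lra.
have hF : forall p, `|p - (- 2^-1)| < 2^-1 -> F p.
  move=> p; rewrite ltr_norml => /andP [h1 h2].
  apply: C_F; apply: (C_between _ _ C1); right; lra.
have h2 : (0 : R) < 2^-1 by lra.
have hh := @no_half R eta Hsel (- 2^-1) (2^-1) h2 hF 0.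
apply: hh; rewrite (_ : - 2^-1 + 2^-1 + 0%:~R = 0 :> R); last by field.
exact: (F0 _ Cc).
Qed.

Lemma Ash_t (c : R) (n : nat) (x : R) : Ash c n x -> exists2 t, 0 < t <= 1 & x = t * c.
Proof.
case=> t /andP [h1 h2] ->; exists t => //.
have := (@hp_pos R) n.+1; have := (@hp_le1 R) n; move=> ? ?; apply/andP; split; lra.
Qed.

Lemma shell_null (c : R) : C c -> c != 0 -> forall n, mu (rep (Ash c n)) = 0%E.
Proof.
move=> Cc c0.
have hc1 := C_small _ Cc.
have mA n : measurable (rep (Ash c n)) by apply: rep_meas; exact: Ash_int.
apply: (shells_null mu (fun n => rep (Ash c n))) => //; last exact: hprob.1.
- by move=> n; exact: rep_I01.
- move=> n m x [hx [k [t /andP [t1 t2] hk]]] [_ [k' [t' /andP [t1' t2'] hk']]].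
  have tpos := (@hp_pos R) n.+1; have tpos' := (@hp_pos R) m.+1.
  have tle := (@hp_le1 R) n; have tle' := (@hp_le1 R) m.
  have ekk : (k - k')%:~R = (t - t') * c :> R by rewrite intrB mulrBl -hk -hk'; ring.
  have e0 : k - k' = 0.
    apply: (@int_small R); rewrite ekk normrM.
    have ht : `|t - t'| < 1 by rewrite ltr_norml; apply/andP; split; lra.
    have := normr_ge0 (t - t'); have := normr_ge0 c; nra.
  have ett : t = t'.
    have : (t - t') * c = 0 by rewrite -ekk e0.
    move/eqP; rewrite mulf_eq0 (negbTE c0) orbF subr_eq0 => /eqP //.
  subst t'.
  case: (ltngtP n m) => // hnm; exfalso.
    have := (@hp_anti R) _ _ hnm; lra.
  have := (@hp_anti R) _ _ hnm; lra.
- move=> n.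
  have hsub : rep (Ash c n) `<=` I01 := rep_I01 _.
  rewrite -(hinv _ (mA n) hsub) E2_pre.
  have m1 : measurable (rep [set u | Ash c n (2 * u)]).
    apply: rep_meas => x y hx hy z /andP [h1 h2].
    by apply: (Ash_int R c n (2 * x) (2 * y) hx hy); apply/andP; split; lra.
  have m2 : measurable (rep [set u | Ash c n (2 * u + 1)]).
    by apply: rep_meas; apply: half_interval; exact: Ash_int.
  apply: le_trans (measureU2 mu m1 m2) _.
  have h1 : (mu (rep [set u | Ash c n (2 * u)%R]) <= mu (rep (Ash c n.+1)))%E.
    apply: le_measure; rewrite ?inE //.
    apply: rep_mono => u [t /andP [a1 b1] e].
    exists (t / 2); last by rewrite mulrAC -e; field.
    by rewrite !hpS; apply/andP; split; rewrite hpS in a1 b1; lra.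
  have h2 : mu (rep [set u | Ash c n (2 * u + 1)]) = 0%E.
    have mN : measurable (I01 `&` ~` F).
      apply: measurableI; first exact: measurable_realfun.is_interval_measurable I01_interval.
      by apply: measurableC; apply: measurable_realfun.closed_measurable; exact: closed_closure.
    apply/eqP; rewrite eq_le measure_ge0 andbT.
    have cF : closed F by exact: closed_closure.
    rewrite -(supp_null mu F cF hsupp).
    apply: le_measure; rewrite ?inE //.
    move=> y [hy [k hk]]; split => // Fy.
    have [t /andP [tp t1] eq] := Ash_t _ _ _ hk.
    set q := 2 * (y + k%:~R) + 1 in eq.
    have qn0 : q != 0 by rewrite eq mulf_neq0 // gt_eqF.
    have qp : 0 < `|q| / 2 by rewrite divr_gt0 // normr_gt0.
    have hF : forall p, `|p - q / 2| < `|q| / 2 -> F p.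
      move=> p hp; apply: C_F; apply: (C_between _ _ Cc).
      have [cpos|cneg] : 0 < c \/ c < 0.
        by move: c0; rewrite neq_lt => /orP [?|?]; [right | left].
        left; have q0 : 0 < q by rewrite eq; nra.
        move: hp; rewrite (gtr0_norm q0) ltr_norml => /andP [? ?].
        apply/andP; split; nra.
      right; have q0 : q < 0 by rewrite eq; nra.
      move: hp; rewrite (ltr0_norm q0) ltr_norml => /andP [? ?].
      apply/andP; split; nra.
    apply: (@no_half R eta Hsel (q / 2) (`|q| / 2) qp hF (- k - 1)).
    rewrite (_ : q / 2 + 2^-1 + (- k - 1)%:~R = y) //.
    by rewrite /q intrB intrN; field.
  have h2' : (mu (rep [set u | Ash c n (2 * u + 1)%R]) <= 0)%E by rewrite h2.
  rewrite -[X in (_ <= X)%E]adde0; exact: leeD h1 h2'.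
Qed.

Lemma petal_rep : petal0 F = rep C.
Proof.
apply/seteqP; split.
  move=> y [hy [z Cz fz]]; split => //; exists (Num.floor z).
  by rewrite -fz -fracE.
move=> y [hy [k hk]]; split => //; exists (y + k%:~R) => //.
by rewrite frac_shift frac_id.
Qed.

Lemma final : (0 < mu (petal0 F))%E -> (0 < mu [set (0%R : R)])%E.
Proof.
move=> hpos; rewrite petal_rep in hpos.
have mC : measurable (rep C) by apply: rep_meas; exact: C_int.
case: (pselect (C 0)) => C0'; last first.
  have e : rep C = set0.
    by apply/seteqP; split => // y [_ [k hk]]; apply: C0'; exact: (C0 _ hk).
  by rewrite e measure0 ltxx in hpos.
have [g [gC gcov]] := cover_seq _ C C_int C0' C_small.
have E'int : is_interval [set z : R | C (- z)].
  move=> x y hx hy z /andP [h1 h2]; apply: (C_int _ _ hy hx); apply/andP; split; lra.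
have E'0 : [set z : R | C (- z)] 0 by rewrite /= oppr0.
have E'b : forall z, [set z : R | C (- z)] z -> `|z| < 1.
  by move=> z /C_small; rewrite normrN.
have [g' [g'C g'cov]] := cover_seq _ _ E'int E'0 E'b.
pose D (m n : nat) : set R := if g m != 0 then rep (Ash (g m) n) else set0.
pose D' (m n : nat) : set R := if g' m != 0 then rep (Ash (- g' m) n) else set0.
have mD m n : measurable (D m n).
  rewrite /D; case: ifP => _; last exact: measurable0.
  by apply: rep_meas; exact: Ash_int.
have mD' m n : measurable (D' m n).
  rewrite /D'; case: ifP => _; last exact: measurable0.
  by apply: rep_meas; exact: Ash_int.
have nD m n : mu (D m n) = 0%E.
  rewrite /D; case: ifP => h; last exact: measure0.
  exact: shell_null.
have nD' m n : mu (D' m n) = 0%E.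
  rewrite /D'; case: ifP => h; last exact: measure0.
  by apply: shell_null; [exact: g'C | rewrite oppr_eq0].
pose Nall := \bigcup_m \bigcup_n (D m n `|` D' m n).
have mNall : measurable Nall.
  apply: bigcupT_measurable => m; apply: bigcupT_measurable => n.
  exact: measurableU.
have nNall : mu Nall = 0%E.
  apply: bigcup_null => m.
    by apply: bigcupT_measurable => n; exact: measurableU.
  apply: bigcup_null => n; first exact: measurableU.
  apply/eqP; rewrite eq_le measure_ge0 andbT.
  apply: le_trans (measureU2 mu (mD m n) (mD' m n)) _.
  have a : (mu (D m n) <= 0)%E by rewrite nD.
  have b : (mu (D' m n) <= 0)%E by rewrite nD'.
  by apply: le_trans (leeD a b) _; rewrite adde0.
have m0 : measurable [set (0 : R)].
  apply: measurable_realfun.is_interval_measurable => x y -> -> z.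
  by rewrite -eq_le => /eqP.
have cov : rep C `<=` [set 0] `|` Nall.
  move=> y [hy [k hk]].
  case: (eqVneq y 0) => y0; first by left.
  right.
  set z := y + k%:~R in hk.
  have z0 : z != 0.
    apply/negP => /eqP ez.
    have yk : y = - k%:~R by move: ez; rewrite /z => ez'; lra.
    have k0 : k = 0.
      apply: (@int_small R); rewrite -normrN -yk ger0_norm; by case/andP: hy.
    by move: y0; rewrite yk k0 oppr0 eqxx.
  move: (z0); rewrite neq_lt => /orP [zn|zp].
    have hz1 : [set z : R | C (- z)] (- z) by rewrite /= opprK.
    have hz2 : 0 < - z by rewrite oppr_gt0.
    have [m hm] := g'cov (- z) hz1 hz2.
    have gp : 0 < g' m by lra.
    have g0 : g' m != 0 by rewrite gt_eqF.
    have [n hn] : exists n, hp n.+1 < z / (- g' m) <= hp n.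
      apply: ex_shell; apply/andP; split.
        by rewrite invrN mulrN -mulNr divr_gt0.
      rewrite invrN mulrN -mulNr ler_pdivrMr // mul1r; lra.
    exists m => //; exists n => //; right; rewrite /D' g0.
    split => //; exists k; exists (z / - g' m) => //.
    by rewrite divfK // oppr_eq0.
  have [m hm] := gcov z hk zp.
  have gp : 0 < g m by lra.
  have g0 : g m != 0 by rewrite gt_eqF.
  have [n hn] : exists n, hp n.+1 < z / g m <= hp n.
    apply: ex_shell; apply/andP; split; first by rewrite divr_gt0.
    by rewrite ler_pdivrMr // mul1r.
  exists m => //; exists n => //; left; rewrite /D g0.
  split => //; exists k; exists (z / g m) => //.
  by rewrite divfK.
have : (mu (rep C) <= mu [set 0%R])%E.
  apply: le_trans (le_measure _ _ _ cov) _; rewrite ?inE //; first exact: measurableU.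
  apply: le_trans (measureU2 mu m0 mNall) _.
  have b : (mu Nall <= 0)%E by rewrite nNall.
  by apply: le_trans (leeD (lexx _) b) _; rewrite adde0.
move=> h; exact: lt_le_trans hpos h.
Qed.

End Main.

Theorem proposition4 (R : realType) (mu : {measure set R -> \bar R}) (F : set R) :
  T_probability mu -> E2_invariant mu -> is_flower F -> supp_subset mu F ->
  (0 < mu (petal0 F))%E -> (0 < mu [set (0%R : R)])%E.
Proof.
move=> hprob hinv [eta Hsel ->] hsupp.
exact: (@final R mu eta Hsel hprob hinv hsupp).
Qed.
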